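(* Let $n\ge2$, let $G$ be an absolutely continuous distribution function on $[0,\infty)$, and $\alpha_1,\dots,\alpha_n,\alpha^*_1,\dots,\alpha^*_n>0$. Let $\phi_1,\phi_2$ be Archimedean generators with pseudo-inverses $\psi_1,\psi_2$. Let $\boldsymbol{X}=(X_1,\dots,X_n)$ have joint distribution function $\phi_1\big(\sum_{i=1}^n\psi_1([G(x_i)]^{\alpha_i})\big)$ and $\boldsymbol{X}^*$ have joint distribution function $\phi_2\big(\sum_{i=1}^n\psi_2([G(x_i)]^{\alpha^*_i})\big)$ (proportional reversed hazard marginals with Archimedean copulas). If $\phi_1$ or $\phi_2$ is log-convex, $\psi_2\circ\phi_1$ is super-additive, and $\prod_{i=1}^{j}\alpha^*_{[i]}\le\prod_{i=1}^{j}\alpha_{[i]}$ for all $j=1,\dots,n$, then $X_{n:n}\ge_{\rm st}X^*_{n:n}$.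
   Context: An Archimedean generator is an $n$-monotone function $\phi:[0,\infty)\to[0,1]$ with $\phi(0)=1$, $\lim_{x\to\infty}\phi(x)=0$ ($n$-monotone: $(-1)^k\phi^{(k)}\ge0$ for $k=0,\dots,n-2$ and $(-1)^{n-2}\phi^{(n-2)}$ decreasing and convex); $\psi=\phi^{-1}$ is its pseudo-inverse. $h$ super-additive means $h(x+y)\ge h(x)+h(y)$ for $x,y\ge0$. $\alpha_{[1]}\ge\dots\ge\alpha_{[n]}$ are the components in decreasing order. $X_{n:n}=\max_i X_i$. $X\le_{\rm st}Y$ means $P(X>x)\le P(Y>x)$ for all $x$. *)

(* Defs.v *)
From HB Require Import structures.
From mathcomp Require Import all_boot all_order all_algebra.
From mathcomp Require Import all_classical all_reals all_analysis.
Set Implicit Arguments. Unset Strict Implicit. Unset Printing Implicit Defensive.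
Import Order.TTheory GRing.Theory Num.Theory.
Import numFieldNormedType.Exports.
Local Open Scope classical_set_scope.
Local Open Scope ring_scope.

Section Defs.
Variable R : realType.

Definition convex_on (S : set R) (f : R -> R) :=
  forall x y t, S x -> S y -> 0 <= t <= 1 ->
    f (t * x + (1 - t) * y) <= t * f x + (1 - t) * f y.

Definition nonincr_on (S : set R) (f : R -> R) :=
  forall x y, S x -> S y -> x <= y -> f y <= f x.

(* n-monotonicity on [0, +oo) (McNeil--Neslehova): f continuous on [0,oo),
   (n-2)-times differentiable on (0,oo), (-1)^k f^(k) >= 0 for k = 0..n-2,
   and (-1)^(n-2) f^(n-2) nonincreasing and convex on (0,oo). *)
Definition n_monotone (n : nat) (f : R -> R) :=
  [/\ {within `[0, +oo[, continuous f} /\ (forall x, 0 <= x -> 0 <= f x),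
      (forall k x, (k < n - 2)%N -> 0 < x -> derivable (derive1n k f) x 1),
      (forall k x, (k <= n - 2)%N -> 0 < x -> 0 <= (-1) ^+ k * derive1n k f x),
      nonincr_on `]0, +oo[ (fun x => (-1) ^+ (n - 2) * derive1n (n - 2) f x) &
      convex_on `]0, +oo[ (fun x => (-1) ^+ (n - 2) * derive1n (n - 2) f x)].

Definition archimedean_generator (n : nat) (phi : R -> R) :=
  [/\ n_monotone n phi,
      (forall x, 0 <= x -> 0 <= phi x <= 1),
      phi 0 = 1 &
      phi x @[x --> +oo] --> (0 : R)].

(* pseudo-inverse psi(y) = inf {x >= 0 | phi x = y}, valued in [0, +oo]
   (inf of the empty set is +oo, e.g. psi(0) = +oo for strict generators) *)
Definition pseudo_inv (phi : R -> R) (y : R) : \bar R :=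
  ereal_inf ((fun x : R => x%:E) @` [set x | 0 <= x /\ phi x = y]).

(* phi extended to [0, +oo] by phi(+oo) = lim_{x->oo} phi x = 0 *)
Definition phiE (phi : R -> R) (e : \bar R) : R :=
  match e with
  | EFin r => phi r
  | +oo%E => 0
  | -oo%E => 1
  end.

Definition log_convex (phi : R -> R) :=
  (forall x, 0 <= x -> 0 < phi x) /\ convex_on `[0, +oo[ (fun x => ln (phi x)).

Definition super_additive (h : R -> \bar R) :=
  forall x y : R, 0 <= x -> 0 <= y -> (h x + h y <= h (x + y)%R)%E.

Definition abs_cont_df_nonneg (G : R -> R) :=
  [/\ (exists g : R -> R, (forall t, 0 <= g t) /\ measurable_fun setT g /\
        forall x, (G x)%:E =
          (\int[@lebesgue_measure R]_(t in `]-oo, x]) (g t)%:E)%E),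
      (forall x, x < 0 -> G x = 0) &
      G x @[x --> +oo] --> (1 : R)].

Definition seqmax (s : seq R) : R := \big[Num.max/head 0 s]_(x <- s) x.
Definition order_max (T : Type) (n : nat) (X : 'I_n -> T -> R) (w : T) : R :=
  seqmax [seq X i w | i <- enum 'I_n].

Definition st_le d1 d2 (T1 : measurableType d1) (T2 : measurableType d2)
  (P1 : probability T1 R) (X : T1 -> R) (P2 : probability T2 R) (Y : T2 -> R) :=
  forall x : R, (P1 [set w | (x < X w)%R] <= P2 [set w | (x < Y w)%R])%E.

Definition has_joint_df d (T : measurableType d) (P : probability T R) (n : nat)
  (X : 'I_n -> T -> R) (phi : R -> R) (G : R -> R) (alpha : 'I_n -> R) :=
  (forall i, measurable_fun setT (X i)) /\
  forall x : 'I_n -> R,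
    P [set w | forall i, X i w <= x i] =
    (phiE phi (\sum_(i < n) pseudo_inv phi (G (x i) `^ alpha i))%E)%:E.

Definition decr (n : nat) (a : 'I_n -> R) : seq R :=
  sort (fun x y : R => y <= x) [seq a i | i <- enum 'I_n].

Definition weakly_prod_dominated (n : nat) (b a : 'I_n -> R) :=
  forall j, (1 <= j <= n)%N ->
    \prod_(x <- take j (decr b)) x <= \prod_(x <- take j (decr a)) x.

End Defs.

(* Main.v *)
Require Import Defs.
From HB Require Import structures.
From mathcomp Require Import all_boot all_order all_algebra.
From mathcomp Require Import all_classical all_reals all_analysis.
From mathcomp Require Import ring lra.
Import Order.TTheory GRing.Theory Num.Theory.
Import numFieldNormedType.Exports.
Local Open Scope classical_set_scope.
Local Open Scope ring_scope.

Section Gen.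
Variable R : realType.
Variable phi : R -> R.
Hypothesis cphi : {within `[0, +oo[, continuous phi}.
Hypothesis phi01 : forall x, 0 <= x -> 0 <= phi x <= 1.
Hypothesis phi0 : phi 0 = 1.
Hypothesis philim : phi x @[x --> +oo] --> (0 : R).

Lemma psi_ge0 y : (0 <= pseudo_inv phi y)%E.
Proof.
apply: le_ereal_inf_tmp => _ [x [x0 _] <-]; by rewrite lee_fin.
Qed.

Lemma psi_le y z : 0 <= y <= 1 -> 0 <= z -> phi z <= y ->
  (pseudo_inv phi y <= z%:E)%E.
Proof.
move=> /andP[y0 y1] z0 pz.
have cz : {within `[0, z], continuous phi}.
  apply: continuous_subspaceW cphi => x /=; rewrite !in_itv /= => /andP[->//].
have [|c c0z pc] := @IVT R phi 0 z y z0 cz.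
  rewrite phi0; apply/andP; split.
    by rewrite ge_min pz orbT.
  by rewrite le_max y1.
apply: ge_ereal_inf; exists c%:E.
  exists c => //; split => //; move: c0z; rewrite in_itv /= => /andP[] //.
by rewrite lee_fin; move: c0z; rewrite in_itv /= => /andP[].
Qed.

Lemma psi_attain y : pseudo_inv phi y != +oo%E ->
  exists x, [/\ 0 <= x, phi x = y & pseudo_inv phi y = x%:E].
Proof.
rewrite /pseudo_inv; set A := [set x | 0 <= x /\ phi x = y].
have [->|A0] := eqVneq A set0.
  by rewrite image_set0 ereal_inf0 eqxx.
move=> _; have neA : A !=set0 by apply/set0P.
have lbA : has_lbound A by exists 0 => x [].
have hinf : has_inf A by [].
set m := inf A.
have m0 : 0 <= m by apply: lb_le_inf => // x [].
rewrite ereal_inf_EFin //.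
exists m; split => //.
apply/eqP; apply/negPn/negP => hne.
have e0 : 0 < `|phi m - y| by rewrite normr_gt0 subr_eq0.
have := (subspace_continuousP _ _).1 cphi m.
rewrite /= in_itv /= andbT => /(_ m0).
move=> /cvgrPdist_lt /(_ _ e0).
rewrite near_withinE => /nbhs_ballP [d /= d0 hd].
have [a [a0 pa] ad] := inf_adherent d0 hinf.
have ma : m <= a by apply: ge_inf.
have := hd a.
have hb : ball m d a.
  rewrite /ball /= distrC ger0_norm ?subr_ge0 // ltrBlDl.
  done.
move=> /(_ hb); rewrite /from_subspace in_itv /= a0 pa => /(_ isT).
by rewrite ltxx.
Qed.

Lemma psi_fin y : 0 < y <= 1 ->
  exists x, [/\ 0 <= x, phi x = y & pseudo_inv phi y = x%:E].
Proof.
move=> /andP[y0 y1]; apply: psi_attain.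
have : \forall t \near +oo, 0 < t /\ phi t < y.
  apply/near_andP; split; first exact: nbhs_pinfty_gt.
  exact: (cvgr_lt 0 philim y y0).
move=> /filter_ex [z [z0 pz]].
have := @psi_le y z; rewrite (ltW y0) y1 (ltW z0) (ltW pz) => /(_ isT isT isT).
by case: (pseudo_inv phi y).
Qed.

Lemma psi_out y : 1 < y -> pseudo_inv phi y = +oo%E.
Proof.
move=> y1; rewrite /pseudo_inv.
suff -> : [set x | 0 <= x /\ phi x = y] = set0 by rewrite image_set0 ereal_inf0.
apply/seteqP; split => // x [x0 px]; move: (phi01 x x0); rewrite px => /andP[_].
by rewrite leNgt y1.
Qed.

Lemma psi_low z w : 0 <= z <= 1 -> 0 <= w -> (w%:E <= pseudo_inv phi z)%E ->
  z <= phi w.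
Proof.
move=> /andP[z0 z1] w0 hw; rewrite leNgt; apply/negP => pw.
have cw : {within `[0, w], continuous phi}.
  apply: continuous_subspaceW cphi => x /=; rewrite !in_itv /= => /andP[->//].
have [|c c0w pc] := @IVT R phi 0 w z w0 cw.
  rewrite phi0; apply/andP; split.
    by rewrite ge_min (ltW pw) orbT.
  by rewrite le_max z1.
move: c0w; rewrite in_itv /= => /andP[c0 cw'].
have : (pseudo_inv phi z <= c%:E)%E.
  by apply: ge_ereal_inf; exists c%:E => //; exists c.
move=> /(le_trans hw); rewrite lee_fin => wc.
have cw2 : c = w by apply/eqP; rewrite eq_le cw' wc.
by move: pw; rewrite -cw2 pc ltxx.
Qed.

Lemma phiE_low z W : 0 <= z <= 1 -> (0 <= W)%E -> (W <= pseudo_inv phi z)%E ->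
  z <= phiE phi W.
Proof.
move=> /andP[z0 z1]; case: W => [w| |] //=.
- by rewrite lee_fin => w0 hw; apply: psi_low => //; rewrite z0 z1.
- move=> _; rewrite leye_eq => /eqP hz.
  rewrite le_eqVlt in z0; case/orP: z0 => [/eqP <-//|z0].
  have [|x [_ _ hx]] := @psi_fin z; first by rewrite z0 z1.
  by rewrite hz in hx.
Qed.

Lemma phiE_ge0 W : (0 <= W)%E -> 0 <= phiE phi W.
Proof.
case: W => [w| |] //=; rewrite lee_fin => w0.
by case/andP: (phi01 w w0).
Qed.

Section LC.
Hypothesis lc : log_convex phi.

Lemma lc_mono x y : 0 <= x -> x <= y -> phi y <= phi x.
Proof.
case: lc => pos cvx x0 xy; rewrite leNgt; apply/negP => pxy.
have y0 : 0 <= y by apply: le_trans xy.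
have xy' : x < y.
  rewrite lt_neqAle xy andbT; apply/negP => /eqP exy.
  by move: pxy; rewrite exy ltxx.
have : \forall t \near +oo, y < t /\ phi t < phi y.
  apply/near_andP; split; first by apply: nbhs_pinfty_gt; exact: num_real.
  exact: (cvgr_lt 0 philim _ (pos _ y0)).
move=> /filter_ex [z [yz pz]].
have z0 : 0 <= z by apply: le_trans (ltW yz).
set l := (z - y) / (z - x).
have e : l * x + (1 - l) * z = y by rewrite /l; field; lra.
have l0 : 0 < l by rewrite /l divr_gt0 //; lra.
have l1 : 0 < 1 - l.
  rewrite subr_gt0 /l ltr_pdivrMr ?mul1r ?subr_gt0; first by lra.
  by apply: lt_trans yz.
have := cvx x z l; rewrite /= !in_itv /= x0 z0 (ltW l0) /= => /(_ isT isT).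
rewrite e; have -> : l <= 1 by lra.
move=> /(_ isT) hc.
have h1 : ln (phi x) < ln (phi y) by rewrite ltr_ln // posrE pos.
have h2 : ln (phi z) < ln (phi y) by rewrite ltr_ln // posrE pos.
have : l * ln (phi x) + (1 - l) * ln (phi z) < ln (phi y).
  have -> : ln (phi y) = l * ln (phi y) + (1 - l) * ln (phi y) by ring.
  by apply: ltrD; rewrite ltr_pM2l.
by rewrite ltNge hc.
Qed.

End LC.

Section GG.
Hypothesis lc : log_convex phi.
Variable s : R.
Hypothesis s0 : 0 < s.

Definition gg (u : R) := fine (pseudo_inv phi (expR (- s * expR u))).

Lemma gg_spec u : [/\ 0 <= gg u, phi (gg u) = expR (- s * expR u) &
  pseudo_inv phi (expR (- s * expR u)) = (gg u)%:E].
Proof.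
have [|x [x0 px hx]] := @psi_fin (expR (- s * expR u)).
  rewrite expR_gt0 expR_le1 /= mulNr oppr_le0 mulr_ge0 // ?expR_ge0 //.
  exact: ltW.
by rewrite /gg hx /=.
Qed.

Lemma gg_mono u v : u <= v -> gg u <= gg v.
Proof.
move=> uv; have [gu0 pu hu] := gg_spec u; have [gv0 pv hv] := gg_spec v.
have := @psi_le (expR (- s * expR u)) (gg v).
rewrite hu lee_fin; apply => //.
  rewrite expR_ge0 expR_le1 /= mulNr oppr_le0 mulr_ge0 // ?expR_ge0 //.
  exact: ltW.
rewrite pv ler_expR.
have : expR u <= expR v by rewrite ler_expR.
by rewrite !mulNr lerN2 ler_pM2l.
Qed.

Lemma expR_cvx (u1 u2 l : R) : 0 <= l <= 1 ->
  expR (l * u1 + (1 - l) * u2) <= l * expR u1 + (1 - l) * expR u2.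
Proof.
move=> /andP[l0 l1].
have [m em] : exists m, m = l * u1 + (1 - l) * u2 by eexists.
rewrite -em.
have e1 : expR u1 = expR m * expR (u1 - m) by rewrite -expRD; congr expR; ring.
have e2 : expR u2 = expR m * expR (u2 - m) by rewrite -expRD; congr expR; ring.
have h1 : expR m * (1 + (u1 - m)) <= expR u1.
  by rewrite e1 ler_wpM2l ?expR_ge0 ?expR_ge1Dx.
have h2 : expR m * (1 + (u2 - m)) <= expR u2.
  by rewrite e2 ler_wpM2l ?expR_ge0 ?expR_ge1Dx.
have h1' : l * (expR m * (1 + (u1 - m))) <= l * expR u1 by rewrite ler_wpM2l.
have h2' : (1 - l) * (expR m * (1 + (u2 - m))) <= (1 - l) * expR u2.
  by rewrite ler_wpM2l // subr_ge0.
have id1 : l * (1 + (u1 - m)) + (1 - l) * (1 + (u2 - m)) = 1 by rewrite em; ring.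
have := congr1 (fun t => expR m * t) id1 => /= id2.
lra.
Qed.

Lemma gg_convex u1 u2 l : 0 <= l <= 1 ->
  gg (l * u1 + (1 - l) * u2) <= l * gg u1 + (1 - l) * gg u2.
Proof.
move=> /andP[l0 l1]; case: lc => pos cvx.
set m := l * u1 + (1 - l) * u2.
have [x10 p1 _] := gg_spec u1; have [x20 p2 _] := gg_spec u2.
have [_ _ hm] := gg_spec m.
set z := l * gg u1 + (1 - l) * gg u2.
have z0 : 0 <= z by rewrite /z addr_ge0 // mulr_ge0 // subr_ge0.
have := cvx (gg u1) (gg u2) l; rewrite /= !in_itv /= x10 x20 l0 l1 => /(_ isT isT isT).
rewrite -/z p1 p2 !expRK => hz.
have he := @expR_cvx u1 u2 l; rewrite l0 l1 -/m in he; have {}he := he isT.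
have hz2 : ln (phi z) <= - s * expR m.
  apply: le_trans hz _; have := ler_wpM2l (ltW s0) he; lra.
have hpz : phi z <= expR (- s * expR m).
  by rewrite -(lnK (pos z z0)) ler_expR.
have := @psi_le (expR (- s * expR m)) z.
rewrite hm lee_fin; apply => //.
rewrite expR_ge0 expR_le1 /= mulNr oppr_le0 mulr_ge0 // ?expR_ge0 //.
exact: ltW.
Qed.

End GG.
End Gen.

Section TW.
Variable R : realType.
Variable g : R -> R.
Hypothesis gcvx : forall u1 u2 l, 0 <= l <= 1 ->
  g (l * u1 + (1 - l) * u2) <= l * g u1 + (1 - l) * g u2.
Hypothesis gmono : forall u v, u <= v -> g u <= g v.

Lemma three_pt (y x z : R) : y < x -> x < z ->
  (z - y) * g x <= (z - x) * g y + (x - y) * g z.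
Proof.
move=> yx xz; set l := (z - x) / (z - y).
have e : l * y + (1 - l) * z = x by rewrite /l; field; lra.
have l0 : 0 <= l by rewrite /l divr_ge0 //; lra.
have l1 : l <= 1 by rewrite /l ler_pdivrMr ?mul1r; lra.
have := @gcvx y z l; rewrite l0 l1 e => /(_ isT) h.
have zy : 0 < z - y by lra.
have := ler_wpM2l (ltW zy) h.
have -> : (z - y) * (l * g y + (1 - l) * g z) = (z - x) * g y + (x - y) * g z.
  by rewrite /l; field; lra.
done.
Qed.

Definition sl (y x : R) := (g x - g y) / (x - y).

Lemma slope_le (a b c d : R) : 0 < b -> 0 < d -> a * d <= c * b -> a / b <= c / d.
Proof.
by move=> b0 d0 h; rewrite ler_pdivrMr // mulrAC ler_pdivlMr.
Qed.

Lemma T1 (y x z : R) : y < x -> x < z -> sl y x <= sl x z.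
Proof.
move=> yx xz; have := three_pt _ _ _ yx xz => h.
apply: slope_le; lra.
Qed.

Lemma T2 (y x z : R) : y < x -> x < z -> sl y x <= sl y z.
Proof.
move=> yx xz; have := three_pt _ _ _ yx xz => h.
apply: slope_le; lra.
Qed.

Arguments T1 {y x z}.
Arguments T2 {y x z}.

Definition SG (x : R) := [set r | exists2 y, y < x & r = sl y x].
Definition sg (x : R) := sup (SG x).

Lemma SG_has x : has_sup (SG x).
Proof.
split; first by exists (sl (x - 1) x), (x - 1) => //; lra.
exists (sl x (x + 1)) => r [y yx ->]; apply: T1 => //; lra.
Qed.

Lemma sg_ub y x : y < x -> sl y x <= sg x.
Proof. by move=> yx; apply: ub_le_sup; [case: (SG_has x)| exists y]. Qed.

Arguments sg_ub {y x}.

Lemma sg_lb x z : x < z -> sg x <= sl x z.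
Proof.
move=> xz; apply: ge_sup; first by case: (SG_has x).
by move=> r [y yx ->]; apply: T1.
Qed.

Arguments sg_lb {x z}.

Lemma sg_sub x u : g x + sg x * (u - x) <= g u.
Proof.
case: (ltgtP u x) => [ux|xu|->]; last by rewrite subrr mulr0 addr0.
- have := sg_ub ux; rewrite /sl ler_pdivrMr ?subr_gt0 // => h; lra.
- have := sg_lb xu; rewrite /sl ler_pdivlMr ?subr_gt0 // => h; lra.
Qed.

Lemma sg_mono x x' : x <= x' -> sg x <= sg x'.
Proof.
move=> xx'; apply: ge_sup; first by case: (SG_has x).
move=> r [y yx ->]; case: (ltgtP x x') => [lt|gt|eq].
- by apply: le_trans (T2 yx lt) (sg_ub _); apply: lt_trans lt.
- by move: xx'; rewrite leNgt gt.
- by rewrite -eq; apply: sg_ub.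
Qed.

Lemma sg_ge0 x : 0 <= sg x.
Proof.
apply: le_trans (sg_ub (y := x - 1) _); last lra.
rewrite /sl divr_ge0 ?subr_ge0 ?gmono //; lra.
Qed.

Lemma TW_gen (v u : seq R) (D c : R) : size u = size v ->
  sorted (fun a b : R => b <= a) v -> 0 <= D -> 0 <= c ->
  (forall x, x \in v -> sg x <= c) ->
  (forall j, \sum_(x <- take j v) x <= D + \sum_(x <- take j u) x) ->
  \sum_(x <- v) g x <= c * D + \sum_(x <- u) g x.
Proof.
elim: v u D c => [|y v IH] [|x u] D c //=.
- by move=> _ _ D0 c0 _ _; rewrite !big_nil addr0 mulr_ge0.
move=> [su] sv D0 c0 hc hpre.
have h1 := hpre 1%N; rewrite /= !take0 !big_cons !big_nil !addr0 in h1.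
have hsv : sorted (fun a b : R => b <= a) v by apply: path_sorted sv.
have hall : all (fun b => b <= y) v.
  by apply: (order_path_min (leT := fun a b : R => b <= a)) sv => a b e h1' h2; apply: le_trans h2 h1'.
have := IH u (D + x - y) (sg y) su hsv.
have -> : 0 <= D + x - y by lra.
rewrite sg_ge0 => /(_ isT isT).
have hc' : forall z, z \in v -> sg z <= sg y.
  by move=> z zv; apply: sg_mono; move/allP: hall => /(_ z zv).
move=> /(_ hc').
have hpre' : forall j, \sum_(z <- take j v) z <= D + x - y + \sum_(z <- take j u) z.
  move=> j; have := hpre j.+1; rewrite /= !big_cons; lra.
move=> /(_ hpre') hIH.
rewrite !big_cons.
have hs := sg_sub y x.
have hcD : sg y * D <= c * D by rewrite ler_wpM2r // hc // mem_head.
lra.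
Qed.
End TW.

Set Implicit Arguments. Unset Strict Implicit.

Section W.
Variables (R : realType) (n : nat) (phi : R -> R).
Hypothesis gen : archimedean_generator n phi.

Let cphi : {within `[0, +oo[, continuous phi}.
Proof. by case: gen => [[[]]]. Qed.
Let phi01 : forall x, 0 <= x -> 0 <= phi x <= 1.
Proof. by case: gen. Qed.
Let phi0 : phi 0 = 1.
Proof. by case: gen. Qed.
Let philim : phi x @[x --> +oo] --> (0 : R).
Proof. by case: gen. Qed.

Lemma W_psi_le y z : 0 <= y <= 1 -> 0 <= z -> phi z <= y ->
  (pseudo_inv phi y <= z%:E)%E.
Proof. by apply: psi_le. Qed.
Lemma W_psi_attain y : pseudo_inv phi y != +oo%E ->
  exists x, [/\ 0 <= x, phi x = y & pseudo_inv phi y = x%:E].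
Proof. by apply: psi_attain. Qed.
Lemma W_psi_fin y : 0 < y <= 1 ->
  exists x, [/\ 0 <= x, phi x = y & pseudo_inv phi y = x%:E].
Proof. by apply: psi_fin. Qed.
Lemma W_psi_out y : 1 < y -> pseudo_inv phi y = +oo%E.
Proof. by apply: psi_out. Qed.
Lemma W_phiE_low z W : 0 <= z <= 1 -> (0 <= W)%E -> (W <= pseudo_inv phi z)%E ->
  z <= phiE phi W.
Proof. by apply: phiE_low. Qed.
Lemma W_phiE_ge0 W : (0 <= W)%E -> 0 <= phiE phi W.
Proof. by apply: phiE_ge0. Qed.
Lemma W_phi01 x : 0 <= x -> 0 <= phi x <= 1.
Proof. exact: phi01. Qed.

Section LCW.
Hypothesis lc : log_convex phi.
Lemma W_lc_mono x y : 0 <= x -> x <= y -> phi y <= phi x.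
Proof. by apply: lc_mono. Qed.
Variable s : R.
Hypothesis s0 : 0 < s.
Lemma W_gg_spec u : [/\ 0 <= gg R phi s u, phi (gg R phi s u) = expR (- s * expR u) &
  pseudo_inv phi (expR (- s * expR u)) = (gg R phi s u)%:E].
Proof. by apply: gg_spec. Qed.
Lemma W_gg_mono u v : u <= v -> gg R phi s u <= gg R phi s v.
Proof. by apply: gg_mono. Qed.
Lemma W_gg_convex u1 u2 l : 0 <= l <= 1 ->
  gg R phi s (l * u1 + (1 - l) * u2) <= l * gg R phi s u1 + (1 - l) * gg R phi s u2.
Proof. by apply: gg_convex. Qed.
End LCW.
End W.

Section SA.
Variables (R : realType) (n m : nat) (phi1 phi2 : R -> R).
Hypothesis gen1 : archimedean_generator m phi1.
Hypothesis gen2 : archimedean_generator m phi2.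
Hypothesis sadd : super_additive (fun x => pseudo_inv phi2 (phi1 x)).

Lemma term_le_sum (f : 'I_n -> \bar R) i0 : (forall i, 0 <= f i)%E ->
  (f i0 <= \sum_(i < n) f i)%E.
Proof.
move=> f0; rewrite (bigD1 i0) //=; apply: leeDl; exact: sume_ge0.
Qed.

Lemma superadd_big (r : seq 'I_n) (f : 'I_n -> R) : (forall i, 0 <= f i) ->
  (\sum_(i <- r) pseudo_inv phi2 (phi1 (f i)) <=
   pseudo_inv phi2 (phi1 (\sum_(i <- r) f i)))%E.
Proof.
move=> f0; elim: r => [|a r IH].
  by rewrite !big_nil; exact: psi_ge0.
rewrite !big_cons.
have h : 0 <= \sum_(i <- r) f i by apply: sumr_ge0 => i _; exact: f0.
have := sadd (f0 a) h.
by apply: le_trans; apply: leeD2l.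
Qed.

Lemma SA_core (y : 'I_n -> R) : (forall i, 0 <= y i <= 1) ->
  (\sum_(i < n) pseudo_inv phi1 (y i) != +oo)%E ->
  (\sum_(i < n) pseudo_inv phi2 (y i) <=
    pseudo_inv phi2 (phiE phi1 (\sum_(i < n) pseudo_inv phi1 (y i))))%E.
Proof.
move=> y01 hS.
have fin i : pseudo_inv phi1 (y i) != +oo%E.
  apply: contra hS => /eqP hi; rewrite eq_le leey /=.
  by rewrite -hi; apply: term_le_sum => j; exact: psi_ge0.
have hs i := W_psi_attain gen1 (fin i).
pose s i := fine (pseudo_inv phi1 (y i)).
have hsE i : pseudo_inv phi1 (y i) = (s i)%:E.
  by have [x [_ _ hx]] := hs i; rewrite /s hx.
have hsp i : phi1 (s i) = y i.
  by have [x [_ px hx]] := hs i; rewrite /s hx.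
have hs0 i : 0 <= s i.
  by have [x [x0 px hx]] := hs i; rewrite /s hx.
have eS : (\sum_(i < n) pseudo_inv phi1 (y i) = (\sum_(i < n) s i)%:E)%E.
  by rewrite -sumEFin; apply: eq_bigr => i _; exact: hsE.
rewrite eS /=.
rewrite (eq_bigr (fun i => pseudo_inv phi2 (phi1 (s i)))); last by move=> i _; rewrite hsp.
exact: superadd_big.
Qed.

Lemma SA (y : 'I_n -> R) : (forall i, 0 <= y i <= 1) ->
  phiE phi1 (\sum_(i < n) pseudo_inv phi1 (y i)) <=
  phiE phi2 (\sum_(i < n) pseudo_inv phi2 (y i)).
Proof.
move=> y01.
have S20 : (0 <= \sum_(i < n) pseudo_inv phi2 (y i))%E.
  by apply: sume_ge0 => i _; exact: psi_ge0.
have S10 : (0 <= \sum_(i < n) pseudo_inv phi1 (y i))%E.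
  by apply: sume_ge0 => i _; exact: psi_ge0.
have [->|hS] := eqVneq (\sum_(i < n) pseudo_inv phi1 (y i))%E +oo%E.
  by rewrite /=; have := W_phiE_ge0 gen2 S20.
apply: (W_phiE_low gen2 _ S20 (SA_core y01 hS)).
move: S10 hS; case: (\sum_(i < n) pseudo_inv phi1 (y i))%E => [r| |] //=.
by rewrite lee_fin => r0 _; have := W_phi01 gen1 r0.
Qed.

End SA.

Lemma elt_le_sum (R : realType) (f : R -> R) (l : seq R) x :
  (forall y, 0 <= f y) -> x \in l -> f x <= \sum_(y <- l) f y.
Proof.
move=> f0; elim: l => [//|a l IH]; rewrite in_cons big_cons => /orP[/eqP ->|xl].
  by rewrite lerDl sumr_ge0.
by apply: le_trans (IH xl) _; rewrite lerDr.
Qed.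

Lemma sum_ln (R : realType) (l : seq R) : all (fun x => 0 < x) l ->
  \sum_(x <- map (@ln R) l) x = ln (\prod_(x <- l) x).
Proof.
elim: l => [|a l IH] /=; first by rewrite !big_nil ln1.
move=> /andP[a0 al]; rewrite !big_cons IH // lnM // posrE //.
by rewrite big_seq; apply: prodr_gt0 => x xl; exact: (allP al x xl).
Qed.

Section TWA.
Variables (R : realType) (n m : nat) (phi : R -> R).
Hypothesis gen : archimedean_generator m phi.
Hypothesis lc : log_convex phi.
Variable s : R.
Hypothesis s0 : 0 < s.
Variables (a b : 'I_n -> R).
Hypothesis a0 : forall i, 0 < a i.
Hypothesis b0 : forall i, 0 < b i.
Hypothesis hn : (0 < n)%N.
Hypothesis dom : weakly_prod_dominated b a.

Let g := gg R phi s.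

Lemma sum_decr (c : 'I_n -> R) :
  \sum_(i < n) g (ln (c i)) = \sum_(x <- map (@ln R) (decr c)) g x.
Proof.
rewrite big_map /decr (perm_big [seq c i | i <- enum 'I_n]); last first.
  by apply/permEl/perm_sort.
by rewrite big_map big_enum.
Qed.

Lemma decr_pos (c : 'I_n -> R) : (forall i, 0 < c i) ->
  all (fun x => 0 < x) (decr c).
Proof.
move=> c0; rewrite /decr all_sort; apply/allP => x /mapP [i _ ->]; exact: c0.
Qed.

Lemma size_decr (c : 'I_n -> R) : size (decr c) = n.
Proof. by rewrite /decr size_sort size_map size_enum_ord. Qed.

Lemma decr_sorted (c : 'I_n -> R) : (forall i, 0 < c i) ->
  sorted (fun x y : R => y <= x) (map (@ln R) (decr c)).
Proof.
move=> c0; rewrite sorted_map.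
apply: (@sub_in_sorted _ (fun x : R => 0 < x) (fun x y : R => y <= x)).
- by move=> x y x0 y0 /=; rewrite ler_ln.
- exact: decr_pos.
- by apply: sort_sorted => x y; exact: le_total.
Qed.

Lemma prefix_ln j : \sum_(x <- take j (map (@ln R) (decr b))) x <=
  0 + \sum_(x <- take j (map (@ln R) (decr a))) x.
Proof.
rewrite add0r -!map_take.
have hpos (c : 'I_n -> R) : (forall i, 0 < c i) -> all (fun x => 0 < x) (take j (decr c)).
  move=> c0; apply/allP => x /mem_take xc; by have := allP (decr_pos c0) x xc.
rewrite !sum_ln ?hpos //.
have pp (c : 'I_n -> R) : (forall i, 0 < c i) -> 0 < \prod_(x <- take j (decr c)) x.
  move=> c0; rewrite big_seq; apply: prodr_gt0 => x xl.
  by have := allP (hpos c c0) x xl.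
rewrite ler_ln ?posrE ?pp //.
clear hpos pp; case: j => [|j]; first by rewrite !take0 !big_nil.
case: (leqP j.+1 n) => hj; first by apply: dom; rewrite hj.
rewrite !take_oversize ?size_decr ?(ltnW hj) //.
have := dom (j := n); rewrite hn leqnn => /(_ isT).
by rewrite !take_oversize ?size_decr.
Qed.

Lemma TW_apply : \sum_(i < n) g (ln (b i)) <= \sum_(i < n) g (ln (a i)).
Proof.
rewrite !sum_decr.
have gcvx : forall u1 u2 l, 0 <= l <= 1 ->
    g (l * u1 + (1 - l) * u2) <= l * g u1 + (1 - l) * g u2.
  by move=> u1 u2 l hl; have := W_gg_convex gen lc s0 u1 u2 hl.
have gmono : forall u v, u <= v -> g u <= g v.
  by move=> u v uv; have := W_gg_mono gen s0 uv.
set v := map (@ln R) (decr b); set u := map (@ln R) (decr a).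
have := @TW_gen R g gcvx gmono v u 0 (\sum_(x <- v) sg R g x).
rewrite mulr0 add0r; apply.
- by rewrite !size_map !size_decr.
- exact: decr_sorted.
- by [].
- by apply: sumr_ge0 => x _; exact: (@sg_ge0 R g gcvx gmono x).
- by move=> x xv; apply: elt_le_sum => // y; exact: (@sg_ge0 R g gcvx gmono y).
- exact: prefix_ln.
Qed.
End TWA.

Lemma big_max_le (R : realType) (l : seq R) (idx r : R) :
  (\big[Num.max/idx]_(x <- l) x <= r) = (idx <= r) && all (fun x => x <= r) l.
Proof.
elim: l => [|a l IH]; first by rewrite big_nil andbT.
by rewrite big_cons /= ge_max IH andbCA.
Qed.

Lemma order_max_le (R : realType) (T : Type) n (X : 'I_n -> T -> R) w r :
  (0 < n)%N -> (order_max X w <= r) = [forall i, X i w <= r].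
Proof.
move=> n0; rewrite /order_max /seqmax big_max_le.
set s := [seq X i w | i <- enum 'I_n].
have hall : all (fun x => x <= r) s = [forall i, X i w <= r].
  rewrite all_map; apply/allP/forallP => h i.
  - by have := h i; rewrite mem_enum; apply.
  - by move=> _; exact: h.
have hd : head 0 s \in s.
  rewrite /s; case E: (enum 'I_n) => [|i l].
    by have := size_enum_ord n; rewrite E /= => h; rewrite -h in n0.
  by rewrite /= mem_head.
rewrite hall; case: (boolP [forall i, X i w <= r]) => h; rewrite ?andbF //.
by rewrite andbT; move: hall; rewrite h => /allP /(_ _ hd).
Qed.

Lemma meas_all (R : realType) d (T : measurableType d) n (X : 'I_n -> T -> R) r :
  (forall i, measurable_fun setT (X i)) -> measurable [set w | forall i, X i w <= r].
Proof.
move=> mX.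
have H : forall l : seq 'I_n, \big[setI/setT]_(i <- l) [set w | X i w <= r] =
    [set w | forall i, i \in l -> X i w <= r].
  elim => [|a l IH]; rewrite ?big_nil ?big_cons.
    by apply/seteqP; split => w //= _ i; rewrite in_nil.
  rewrite IH; apply/seteqP; split => w /=.
  - move=> [h1 h2] i; rewrite in_cons => /orP[/eqP->//|]; exact: h2.
  - move=> h; split; first by apply: h; rewrite mem_head.
    by move=> i il; apply: h; rewrite in_cons il orbT.
have -> : [set w | forall i, X i w <= r] = \big[setI/setT]_(i <- enum 'I_n) [set w | X i w <= r].
  rewrite H; apply/seteqP; split => w /= h i.
  - by move=> _; exact: h.
  - by have := h i; rewrite mem_enum; apply.
apply: bigsetI_measurable => i _.
have := mX i measurableT _ (measurable_itv `]-oo, r]); rewrite setTI.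
suff -> : X i @^-1` `]-oo, r] = [set w | X i w <= r] by [].
by apply/seteqP; split => w /=; rewrite in_itv.
Qed.

Section Core.
Variables (R : realType) (n : nat) (phi1 phi2 : R -> R) (alpha alphas : 'I_n -> R).
Hypothesis hn : (2 <= n)%N.
Hypothesis gen1 : archimedean_generator n phi1.
Hypothesis gen2 : archimedean_generator n phi2.
Hypothesis a0 : forall i, 0 < alpha i.
Hypothesis b0 : forall i, 0 < alphas i.
Hypothesis lc : log_convex phi1 \/ log_convex phi2.
Hypothesis sadd : super_additive (fun x => pseudo_inv phi2 (phi1 x)).
Hypothesis dom : weakly_prod_dominated alphas alpha.

Lemma core t : 0 <= t ->
  phiE phi1 (\sum_(i < n) pseudo_inv phi1 (t `^ alpha i)) <=
  phiE phi2 (\sum_(i < n) pseudo_inv phi2 (t `^ alphas i)).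
Proof.
move=> t0.
have n0 : (0 < n)%N by apply: leq_trans hn.
have S20 : (0 <= \sum_(i < n) pseudo_inv phi2 (t `^ alphas i))%E.
  by apply: sume_ge0 => i _; exact: psi_ge0.
case: (ltrgtP t 1) => [t1|t1|->]; last first.
- rewrite (eq_bigr (fun=> pseudo_inv phi1 1)); last by move=> i _; rewrite powR1.
  rewrite [X in _ <= phiE _ X](eq_bigr (fun=> pseudo_inv phi2 1)); last by move=> i _; rewrite powR1.
  by apply: (SA gen1 gen2 sadd) => i; rewrite ler01 lexx.
- pose i0 : 'I_n := Ordinal n0.
  have hi0 : pseudo_inv phi1 (t `^ alpha i0) = +oo%E.
    apply: (W_psi_out gen1); rewrite /powR gt_eqF; last by apply: lt_trans t1.
    by rewrite expR_gt1 mulr_gt0 // ln_gt0.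
  have := @term_le_sum R n (fun i => pseudo_inv phi1 (t `^ alpha i)) i0 (fun i => psi_ge0 _ _ _).
  rewrite hi0 leye_eq => /eqP -> /=.
  by have := W_phiE_ge0 gen2 S20.
- rewrite le_eqVlt in t0; case/orP: t0 => [/eqP <-|tp].
    rewrite (eq_bigr (fun=> pseudo_inv phi1 0)); last first.
      by move=> i _; rewrite powR0 // gt_eqF.
    rewrite [X in _ <= phiE _ X](eq_bigr (fun=> pseudo_inv phi2 0)); last first.
      by move=> i _; rewrite powR0 // gt_eqF.
    by apply: (SA gen1 gen2 sadd) => i; rewrite ler01 lexx.
  have [s [s0 hs]] : exists s, 0 < s /\ ln t = - s.
    by exists (- ln t); rewrite opprK oppr_gt0 ln_lt0 // tp t1.
  have hpow c : 0 < c -> t `^ c = expR (- s * expR (ln c)).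
    move=> c0; rewrite /powR (gt_eqF tp) lnK ?posrE // hs.
    by rewrite mulrN mulNr mulrC.
  have y01 c : 0 < c -> 0 <= t `^ c <= 1.
    move=> c0; rewrite hpow // expR_ge0 expR_le1 /= mulNr oppr_le0.
    by rewrite mulr_ge0 // ?expR_ge0 // ltW.
  have sumE phi (gen : archimedean_generator n phi) (c : 'I_n -> R) :
      (forall i, 0 < c i) ->
      (\sum_(i < n) pseudo_inv phi (t `^ c i) = (\sum_(i < n) gg R phi s (ln (c i)))%:E)%E.
    move=> c0; rewrite -sumEFin; apply: eq_bigr => i _.
    by rewrite hpow //; case: (W_gg_spec gen s0 (ln (c i))).
  have gg0 phi (gen : archimedean_generator n phi) (c : 'I_n -> R) :
      0 <= \sum_(i < n) gg R phi s (ln (c i)).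
    by apply: sumr_ge0 => i _; case: (W_gg_spec gen s0 (ln (c i))).
  case: lc => [lc1|lc2].
  + have tw := TW_apply gen1 lc1 s0 a0 b0 n0 dom.
    rewrite (sumE _ gen1) //=.
    apply: le_trans (W_lc_mono gen1 lc1 (gg0 _ gen1 _) tw) _.
    have := SA gen1 gen2 sadd (y := fun i => t `^ alphas i) (fun i => y01 _ (b0 i)).
    by rewrite (sumE _ gen1) //=.
  + have tw := TW_apply gen2 lc2 s0 a0 b0 n0 dom.
    have hA := SA_core gen1 sadd (y := fun i => t `^ alpha i) (fun i => y01 _ (a0 i)).
    rewrite (sumE _ gen1) // in hA; have {}hA := hA isT.
    apply: (W_phiE_low gen2 _ S20).
      rewrite (sumE _ gen1) //=; by have := W_phi01 gen1 (gg0 _ gen1 alpha).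
    rewrite (sumE _ gen1) //; apply: le_trans _ hA; rewrite (sumE _ gen2) // (sumE _ gen2) // lee_fin.
Qed.
End Core.

Lemma set_gt_max (R : realType) d (T : measurableType d) n (X : 'I_n -> T -> R) r :
  (0 < n)%N ->
  [set w | r < order_max X w] = ~` [set w | forall i, X i w <= r].
Proof.
move=> n0; apply/seteqP; split => w /=.
- move=> h hall; move: h; rewrite ltNge order_max_le // => /negP; apply.
  by apply/forallP.
- move=> h; rewrite ltNge order_max_le //; apply/negP => /forallP; exact: h.
Qed.

Unset Implicit Arguments.

Theorem mainTheorem14 (R : realType) (n : nat) (hn : (2 <= n)%N)
  (G : R -> R) (alpha alphas : 'I_n -> R)
  (phi1 phi2 : R -> R)
  (d1 d2 : measure_display) (T1 : measurableType d1) (T2 : measurableType d2)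
  (P1 : probability T1 R) (P2 : probability T2 R)
  (X : 'I_n -> T1 -> R) (Xs : 'I_n -> T2 -> R) :
  abs_cont_df_nonneg G ->
  (forall i, 0 < alpha i) -> (forall i, 0 < alphas i) ->
  archimedean_generator n phi1 -> archimedean_generator n phi2 ->
  has_joint_df P1 X phi1 G alpha ->
  has_joint_df P2 Xs phi2 G alphas ->
  log_convex phi1 \/ log_convex phi2 ->
  super_additive (fun x => pseudo_inv phi2 (phi1 x)) ->
  weakly_prod_dominated alphas alpha ->
  st_le P2 (order_max Xs) P1 (order_max X).
Proof.
move=> hG a0 b0 gen1 gen2 [mX hX] [mXs hXs] lc sadd dom r.
have n0 : (0 < n)%N by apply: leq_trans hn.
rewrite (set_gt_max _ _ n0) (set_gt_max _ _ n0).
rewrite !probability_setC; try exact: meas_all.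
have eX : P1 [set w | forall i, X i w <= r] =
  (phiE phi1 (\sum_(i < n) pseudo_inv phi1 (G r `^ alpha i)))%:E := hX (fun=> r).
have eXs : P2 [set w | forall i, Xs i w <= r] =
  (phiE phi2 (\sum_(i < n) pseudo_inv phi2 (G r `^ alphas i)))%:E := hXs (fun=> r).
rewrite eX eXs -!EFinB lee_fin lerD2l lerN2.
apply: core => //.
case: hG => [[g [g0 [_ hGi]]] _ _].
have : (0 <= (G r)%:E)%E.
  by rewrite hGi; apply: integral_ge0 => x _; rewrite lee_fin.
by rewrite lee_fin.
Qed.
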